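(* Let $\varphi$ be the rational map of the Riemann sphere $\hat{\mathbb{C}}$ given by $$\varphi(z)=\frac{z(2+z)(1+z-z^2)}{(1+2z)(1-z-z^2)},$$ and let $\omega=e^{2\pi i/3}$. Then $\omega$ and $\omega^2$ are attracting fixed points of $\varphi$; for every $z\in\mathbb{C}$ with $\operatorname{Im}z>0$ one has $\varphi^{\circ n}(z)\to\omega$, and for every $z\in\mathbb{C}$ with $\operatorname{Im}z<0$ one has $\varphi^{\circ n}(z)\to\omega^2$ as $n\to\infty$. The extended real line $\mathbb{R}\cup\{\infty\}$ is forward and backward invariant under $\varphi$. *)

(* Defs.v *)
(* C = R[i] (complex numbers over a
   real type R, from mathcomp-real-closed), viewed through its regular
   normed structure (R[i])^o so that MathComp-Analysis limits/derivatives
   apply. *)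
From HB Require Import structures.
From mathcomp Require Import all_boot all_order all_algebra.
From mathcomp Require Import complex.
From mathcomp Require Import all_classical all_reals all_analysis.
Import Order.TTheory GRing.Theory Num.Theory.
Import numFieldTopology.Exports numFieldNormedType.Exports.

Set Implicit Arguments.
Unset Strict Implicit.
Unset Printing Implicit Defensive.

Local Open Scope ring_scope.
Local Open Scope classical_set_scope.

Notation Cplx R := ((complex R)^o).

(* the Riemann sphere: None is the point at infinity *)
Notation sphere R := (option (Cplx R)).

Definition phiP (R : realType) (z : Cplx R) : Cplx R :=
  z * (2 + z) * (1 + z - z ^+ 2).
Definition phiQ (R : realType) (z : Cplx R) : Cplx R :=
  (1 + 2 * z) * (1 - z - z ^+ 2).

Definition phiC (R : realType) (z : Cplx R) : Cplx R := phiP z / phiQ z.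

(* phi as a map of the Riemann sphere: poles go to infinity, and since
   deg P = 4 > 3 = deg Q, infinity goes to infinity.  (P and Q have no
   common root, so this is the standard extension.) *)
Definition phi (R : realType) (p : sphere R) : sphere R :=
  match p with
  | None => None
  | Some z => if phiQ z == 0 then None else Some (phiC z)
  end.

Definition omega (R : realType) : Cplx R :=
  Complex (cos (2 * pi / 3 : R)) (sin (2 * pi / 3 : R)).

Definition attracting_fixed (R : realType) (f : sphere R -> sphere R)
  (fC : Cplx R -> Cplx R) (w : Cplx R) : Prop :=
  f (Some w) = Some w /\ derivable fC w 1 /\ `| fC^`() w | < 1.

Definition sphere_cvg_fin (R : realType) (s : nat -> sphere R) (w : Cplx R)
  : Prop :=
  exists u : nat -> Cplx R,
    (\forall n \near \oo, s n = Some (u n)) /\ u n @[n --> \oo] --> w.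

Definition ext_real_line (R : realType) : set (sphere R) :=
  fun p => match p with None => True | Some z => complex.Im z = 0 end.

(* Main.v *)
Require Import Defs.
From HB Require Import structures.
From mathcomp Require Import all_boot all_order all_algebra.
From mathcomp Require Import complex.
From mathcomp Require Import all_classical all_reals all_analysis.
From mathcomp Require Import ring lra.
Import Order.TTheory GRing.Theory Num.Theory.
Import numFieldTopology.Exports numFieldNormedType.Exports.
Local Open Scope ring_scope.
Local Open Scope classical_set_scope.

Section Work.
Variable R : realType.
Local Notation C := (Cplx R).

Definition N (x : C) : R := complex.Re x ^+ 2 + complex.Im x ^+ 2.

Lemma ReM (x y : C) : complex.Re (x * y) = complex.Re x * complex.Re y - complex.Im x * complex.Im y.
Proof. by case: x => a b; case: y => c d. Qed.
Lemma ImM (x y : C) : complex.Im (x * y) = complex.Re x * complex.Im y + complex.Im x * complex.Re y.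
Proof. by case: x => a b; case: y => c d. Qed.
Lemma ReD (x y : C) : complex.Re (x + y) = complex.Re x + complex.Re y.
Proof. by case: x => a b; case: y => c d. Qed.
Lemma ImD (x y : C) : complex.Im (x + y) = complex.Im x + complex.Im y.
Proof. by case: x => a b; case: y => c d. Qed.
Lemma ReN (x : C) : complex.Re (- x) = - complex.Re x.
Proof. by case: x => a b. Qed.
Lemma ImN (x : C) : complex.Im (- x) = - complex.Im x.
Proof. by case: x => a b. Qed.

Lemma NM (x y : C) : N (x * y) = N x * N y.
Proof. rewrite /N ReM ImM; ring. Qed.
Lemma N_ge0 x : 0 <= N x.
Proof. rewrite /N; nra. Qed.
Lemma N_eq0 x : N x = 0 -> x = 0.
Proof.
case: x => a b; rewrite /N /= => h.
have ha : a = 0 by nra. have hb : b = 0 by nra. by rewrite ha hb.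
Qed.
Lemma N_gt0 x : x != 0 -> 0 < N x.
Proof. move=> hx; rewrite lt_def N_ge0 andbT; apply/eqP => /N_eq0 h; by rewrite h eqxx in hx. Qed.
Lemma NX x n : N (x ^+ n) = N x ^+ n.
Proof. elim: n => [|n IH]; first by rewrite !expr0 /N /=; ring.
by rewrite !exprS NM IH. Qed.
Lemma NV x : N (x^-1) = (N x)^-1.
Proof.
have [->|hx] := eqVneq x 0; first by rewrite invr0 /N /= expr0n /= addr0 invr0.
have h1 : N (x * x^-1) = 1 by rewrite mulfV // /N /=; ring.
rewrite NM in h1. have h2 : N x != 0 by rewrite gt_eqF // N_gt0.
apply: (mulfI h2); rewrite h1 mulfV //.
Qed.
Lemma N_add_le x y : N (x + y) <= 2 * N x + 2 * N y.
Proof. rewrite /N ReD ImD.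
have := sqr_ge0 (complex.Re x - complex.Re y); have := sqr_ge0 (complex.Im x - complex.Im y); nra. Qed.
Lemma N_2xy x y : N (2 * x + y) - N (2 * y + x) = 3 * (N x - N y).
Proof. rewrite /N !ReD !ImD !ReM !ImM /=. ring. Qed.

Lemma N_opp x : N (- x) = N x.
Proof. rewrite /N ReN ImN; ring. Qed.
Lemma ReMn (x : C) n : complex.Re (x *+ n) = complex.Re x *+ n.
Proof. elim: n => [|n IH]; first by rewrite !mulr0n. by rewrite !mulrS ReD IH. Qed.
Lemma ImMn (x : C) n : complex.Im (x *+ n) = complex.Im x *+ n.
Proof. elim: n => [|n IH]; first by rewrite !mulr0n. by rewrite !mulrS ImD IH. Qed.
Lemma N_nat (x : C) n : N (n%:R * x) = (n%:R) ^+ 2 * N x.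
Proof. rewrite mulr_natl /N ReMn ImMn -(mulr_natl (complex.Re x)) -(mulr_natl (complex.Im x)); ring. Qed.

Lemma key_id (z w : C) : 3 * (phiP z - w * phiQ z) + (z - w) * (2 * (z - w) ^+ 3 + (z + 1 + w) ^+ 3)
  = (- (4) * w + w ^+ 2 + 7 * z - 10 * z * w + 12 * z ^+ 2) * (w ^+ 2 + w + 1).
Proof. rewrite /phiP /phiQ; ring. Qed.

Lemma key (z w : C) : w ^+ 2 + w + 1 = 0 ->
  3 * (phiP z - w * phiQ z) = - ((z - w) * (2 * (z - w) ^+ 3 + (z + 1 + w) ^+ 3)).
Proof.
move=> hw; apply/eqP; rewrite -subr_eq0 opprK key_id hw mulr0 //.
Qed.

Lemma step (w z : C) : w ^+ 2 + w + 1 = 0 -> N (z - w) < N (z + 1 + w) ->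
  phiQ z != 0 /\ N (phiC z - w) < N (phiC z + 1 + w) /\
  N (phiC z - w) / N (phiC z + 1 + w) <=
   N (z - w) / N (z + 1 + w) * (1 - 3 / 10 * (1 - (N (z - w) / N (z + 1 + w)) ^+ 3)).
Proof.
move=> hw hab.
have hw' : (- 1 - w) ^+ 2 + (- 1 - w) + 1 = 0 by rewrite -hw; ring.
have hA := key z w hw.
have hB := key z (-1 - w) hw'.
have e1 : z - (-1 - w) = z + 1 + w by ring.
have e2 : z + 1 + (-1 - w) = z - w by ring.
rewrite e1 e2 in hB.
move: hA hB hab.
set a := z - w; set b := z + 1 + w.
set A := phiP z - w * phiQ z; set B := phiP z - (-1 - w) * phiQ z.
set X := 2 * a ^+ 3 + b ^+ 3; set Y := 2 * b ^+ 3 + a ^+ 3 => hA hB hab.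
have NXY : N X - N Y = 3 * (N a ^+ 3 - N b ^+ 3) by rewrite /X /Y N_2xy !NX.
have Na0 := N_ge0 a.
have NX0 := N_ge0 X.
have ha3 : N a ^+ 3 < N b ^+ 3 by rewrite ltrXn2r.
have NY10 : N Y <= 10 * N b ^+ 3.
  have := N_add_le (2 * b ^+ 3) (a ^+ 3).
  rewrite /Y (N_nat _ 2) !NX => h. apply: (le_trans h).
  have : N a ^+ 3 <= N b ^+ 3 by apply: ltW.
  move=> h2. timeout 20 lra.
have Nb0 : 0 < N b by apply: le_lt_trans hab.
have NXlt : N X < N Y by rewrite -subr_lt0 NXY; timeout 20 nra.
have NY0 : 0 < N Y by apply: le_lt_trans NXlt.
have NA : 9 * N A = N a * N X.
  have := congr1 N hA; rewrite (N_nat _ 3) N_opp NM => <-; ring.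
have NB : 9 * N B = N b * N Y.
  have := congr1 N hB; rewrite (N_nat _ 3) N_opp NM => <-; ring.
have NAB : N A < N B.
  have h1 : N a * N X <= N a * N Y by rewrite ler_wpM2l // ltW.
  have h2 : N a * N Y < N b * N Y by rewrite ltr_pM2r.
  timeout 20 nra.
have hQ : phiQ z != 0.
  apply/eqP => hQ0; move: NAB; rewrite /A /B hQ0 !mulr0 ltxx //.
have eA : phiC z - w = A / phiQ z by rewrite /phiC /A; timeout 20 field.
have eB : phiC z + 1 + w = B / phiQ z by rewrite /phiC /B; timeout 20 field.
have NQ0 : 0 < N (phiQ z) by apply: N_gt0.
have NQ0' : N (phiQ z) != 0 by rewrite gt_eqF.
have NB0 : N B != 0 by rewrite gt_eqF //; apply: le_lt_trans NAB; apply: N_ge0.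
have Nb0' : N b != 0 by rewrite gt_eqF.
have NY0' : N Y != 0 by rewrite gt_eqF.
split => //; rewrite eA eB !NM !NV; split.
  by rewrite ltr_pM2r // invr_gt0.
have -> : N A * (N (phiQ z))^-1 / (N B * (N (phiQ z))^-1) = N A / N B.
  by timeout 20 field; rewrite NB0 NQ0'.
have -> : N A / N B = N a / N b * (N X / N Y).
  have hNB : N B = N b * N Y / 9 by rewrite -NB; timeout 20 field.
  have hNA : N A = N a * N X / 9 by rewrite -NA; timeout 20 field.
  by rewrite hNA hNB; timeout 20 field; rewrite NY0' Nb0'.
apply: ler_wpM2l; first by rewrite divr_ge0 // ltW.
set u := N a ^+ 3; set v := N b ^+ 3.
have v0 : 0 < v by rewrite exprn_gt0.
have -> : (N a / N b) ^+ 3 = u / v by rewrite expr_div_n.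
set t := 1 - u / v.
have t0 : 0 <= t by rewrite subr_ge0 ler_pdivrMr // mul1r ltW.
have tv : t * v = v - u by rewrite /t; timeout 20 field; rewrite gt_eqF.
rewrite ler_pdivrMr //.
have h : 0 <= t * (10 * v - N Y) by apply: mulr_ge0 => //; rewrite subr_ge0.
move: NXY NY10; rewrite -/u -/v => NXY NY10.
timeout 20 nra.
Qed.

Lemma C_ext (x y : C) : complex.Re x = complex.Re y -> complex.Im x = complex.Im y -> x = y.
Proof. by case: x => a b; case: y => c d /= -> ->. Qed.

Lemma cisM (a b : R) : (Complex (cos a) (sin a) : C) * Complex (cos b) (sin b) = Complex (cos (a + b)) (sin (a + b)).
Proof. apply: C_ext; rewrite ?ReM ?ImM /= ?cosD ?sinD; ring. Qed.

Lemma omega3 : (omega R : C) ^+ 3 = 1.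
Proof.
rewrite /omega !exprS expr0 mulr1 !cisM.
have -> : 2 * pi / 3 + (2 * pi / 3 + 2 * pi / 3) = pi *+ 2 :> R by rewrite -mulr_natr; field.
by rewrite cos2pi sin2pi.
Qed.

Lemma omega_im : 0 < complex.Im (omega R : C).
Proof. rewrite /omega /=; apply: sin_gt0_pi; have hp := pi_gt0 R; apply/andP; split; lra. Qed.

Lemma omega_eq : (omega R : C) ^+ 2 + omega R + 1 = 0.
Proof.
have h : (omega R - 1) * ((omega R : C) ^+ 2 + omega R + 1) = 0.
  have -> : (omega R - 1) * ((omega R : C) ^+ 2 + omega R + 1) = omega R ^+ 3 - 1 by ring.
  by rewrite omega3 subrr.
move/eqP: h; rewrite mulf_eq0 => /orP [|/eqP //].
rewrite subr_eq0 => /eqP h1; have := omega_im; rewrite h1 /= ltxx //.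
Qed.

Lemma re_root (w : C) : w ^+ 2 + w + 1 = 0 -> complex.Im w != 0 -> 2 * complex.Re w + 1 = 0.
Proof.
case: w => a s h hs.
have := congr1 (@complex.Im R) h.
rewrite !ImD expr2 ImM /= => h2.
have : s * (2 * a + 1) = 0 by rewrite -[RHS]h2; ring.
by move/eqP; rewrite mulf_eq0 (negbTE hs) /= => /eqP.
Qed.

Lemma omega_re : 2 * complex.Re (omega R : C) + 1 = 0.
Proof. by apply: re_root; [exact: omega_eq | rewrite gt_eqF // omega_im]. Qed.

Lemma halfplane (w z : C) : 2 * complex.Re w + 1 = 0 ->
  N (z - w) - N (z + 1 + w) = - 4 * complex.Im w * complex.Im z.
Proof.
move=> h; apply/eqP; rewrite -subr_eq0; apply/eqP.
rewrite /N !ReD !ImD !ReN !ImN /=.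
transitivity (- (2 * complex.Re z + 1) * (2 * complex.Re w + 1)); first ring.
by rewrite h mulr0.
Qed.

Lemma cube_le (a b : R) : 0 <= a -> a <= b -> a ^+ 3 <= b ^+ 3.
Proof.
move=> ha hab; rewrite -subr_ge0.
have -> : b ^+ 3 - a ^+ 3 = (b - a) * (b ^+ 2 + a * b + a ^+ 2) by ring.
apply: mulr_ge0; first by rewrite subr_ge0.
have hb : 0 <= b by apply: le_trans hab.
by rewrite !addr_ge0 ?exprn_ge0 ?mulr_ge0.
Qed.

Definition rr (w z : C) : R := N (z - w) / N (z + 1 + w).

Lemma rr_ge0 w z : 0 <= rr w z.
Proof. by rewrite /rr divr_ge0 ?N_ge0. Qed.

Lemma rr_lt1 w z : N (z - w) < N (z + 1 + w) -> rr w z < 1.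
Proof.
move=> h; have h0 : 0 < N (z + 1 + w) by apply: le_lt_trans h; apply: N_ge0.
by rewrite /rr ltr_pdivrMr // mul1r.
Qed.

Lemma iter_phi (w z0 : C) : w ^+ 2 + w + 1 = 0 -> N (z0 - w) < N (z0 + 1 + w) ->
  let q := 1 - 3 / 10 * (1 - rr w z0 ^+ 3) in
  forall n, iter n (@phi R) (Some z0) = Some (iter n (@phiC R) z0) /\
    N (iter n (@phiC R) z0 - w) < N (iter n (@phiC R) z0 + 1 + w) /\
    rr w (iter n (@phiC R) z0) <= q ^+ n * rr w z0.
Proof.
move=> hw h0 q.
have r0 := rr_ge0 w z0. have r1 := rr_lt1 w z0 h0.
have q0 : 0 <= q.
  rewrite /q; have : 0 <= rr w z0 ^+ 3 by rewrite exprn_ge0. lra.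
have q1 : q <= 1.
  rewrite /q; have : rr w z0 ^+ 3 <= 1 by apply: exprn_ile1 => //; exact: ltW. lra.
elim => [|n [IH1 [IH2 IH3]]]; first by rewrite /= expr0 mul1r.
have [hQ [hlt hrr]] := step w _ hw IH2.
rewrite /= IH1 /= (negbTE hQ); split => //; split => //.
set zn := iter n (@phiC R) z0 in IH1 IH2 IH3 hQ hlt hrr *.
have rn0 := rr_ge0 w zn.
have hqn : q ^+ n <= 1 by apply: exprn_ile1.
have hrn : rr w zn <= rr w z0.
  apply: le_trans IH3 _; rewrite -[X in _ <= X]mul1r ler_wpM2r //.
have hc := cube_le _ _ rn0 hrn.
have hc0 : 0 <= rr w zn ^+ 3 by rewrite exprn_ge0.
apply: le_trans (_ : rr w zn * q <= _).
  have hrr' : rr w (phiC zn) <= rr w zn * (1 - 3/10*(1 - rr w zn ^+ 3)) := hrr.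
  apply: le_trans hrr' _.
  apply: ler_wpM2l => //. rewrite /q; lra.
rewrite exprS -mulrA [q * _]mulrC; apply: ler_wpM2r => //.
Qed.

Lemma N2w1 (w : C) : w ^+ 2 + w + 1 = 0 -> N (2 * w + 1) = 3.
Proof.
move=> hw.
have h1 : (2 * w + 1) ^+ 2 = - (3%:R * 1) by rewrite mulr1; transitivity (4 * (w ^+ 2 + w + 1) - 3); [ring | rewrite hw; ring].
have := congr1 N h1; rewrite NX N_opp N_nat.
have -> : N 1 = 1 by rewrite /N /=; ring.
have := N_ge0 (2 * w + 1). move=> h0 h2.
have : (N (2 * w + 1) - 3) * (N (2 * w + 1) + 3) = 0 by rewrite -subr_sqr h2; ring.
move/eqP; rewrite mulf_eq0 => /orP [/eqP h|/eqP h]; first by apply/eqP; rewrite -subr_eq0 h.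
lra.
Qed.

Lemma close_bound (w z : C) : w ^+ 2 + w + 1 = 0 -> N (z - w) < N (z + 1 + w) ->
  rr w z <= 1/4 -> N (z - w) <= 12 * rr w z.
Proof.
move=> hw hlt hr.
have t0 : 0 < N (z + 1 + w) by apply: le_lt_trans hlt; apply: N_ge0.
have ht : N (z + 1 + w) <= 2 * N (z - w) + 6.
  have := N_add_le (z - w) (2 * w + 1); rewrite N2w1 //.
  have -> : z - w + (2 * w + 1) = z + 1 + w by ring.
  move=> h; lra.
have hs : N (z - w) = rr w z * N (z + 1 + w) by rewrite /rr; field; rewrite gt_eqF.
have r0 := rr_ge0 w z.
have s0 := N_ge0 (z - w).
rewrite hs in s0 *.
have : rr w z * N (z + 1 + w) <= rr w z * (2 * (rr w z * N (z + 1 + w)) + 6).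
  by apply: ler_wpM2l => //; rewrite -hs.
nra.
Qed.

Lemma conv (w z0 : C) : w ^+ 2 + w + 1 = 0 -> N (z0 - w) < N (z0 + 1 + w) ->
  sphere_cvg_fin (fun n => iter n (@phi R) (Some z0)) w.
Proof.
move=> hw h0.
have HI := iter_phi w z0 hw h0.
set q := 1 - 3 / 10 * (1 - rr w z0 ^+ 3) in HI.
exists (fun n => iter n (@phiC R) z0); split.
  by apply: nearW => n; case: (HI n).
have r0 := rr_ge0 w z0. have r1 := rr_lt1 w z0 h0.
have q0 : 0 <= q.
  rewrite /q; have : 0 <= rr w z0 ^+ 3 by rewrite exprn_ge0. lra.
have q1 : q < 1.
  rewrite /q; have : rr w z0 ^+ 3 < 1 by rewrite expr_lt1. lra.
have hq : (fun n => q ^+ n) @ \oo --> (0 : R).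
  by apply: cvg_expr; rewrite ger0_norm.
apply/cvgrPdist_lt => e he.
move: he; rewrite ltcE /= => /andP [/eqP hie hre].
set eps := complex.Re e in hre.
have epos : 0 < Num.min (1/4) (eps ^+ 2 / 12).
  by rewrite lt_min; apply/andP; split => //; rewrite divr_gt0 // exprn_gt0.
move/cvgr0Pnorm_lt : hq => /(_ _ epos).
apply: filterS => n hn.
have [_ [hlt hrr]] := HI n.
set zn := iter n (@phiC R) z0 in hlt hrr *.
rewrite ger0_norm ?exprn_ge0 // lt_min in hn.
move/andP: hn => [hn1 hn2].
have hqr : q ^+ n * rr w z0 <= q ^+ n.
  rewrite -[X in _ <= X]mulr1; apply: ler_wpM2l; [by rewrite exprn_ge0 | exact: ltW].
have hr4 : rr w zn <= 1/4 by apply: le_trans hrr (le_trans hqr (ltW hn1)).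
have hb := close_bound w zn hw hlt hr4.
have hNe : N (zn - w) < eps ^+ 2.
  apply: le_lt_trans hb _.
  have : rr w zn < eps ^+ 2 / 12 by apply: le_lt_trans hrr (le_lt_trans hqr hn2).
  lra.
rewrite normc_def ltcE /= hie eqxx /=.
rewrite -[complex.Re e]/eps -(ger0_norm (ltW hre)) -sqrtr_sqr ltr_sqrt ?exprn_gt0 //.
have -> : w - zn = - (zn - w) by rewrite opprB.
by rewrite -[_ + _]/(N (- (zn - w))) N_opp.
Qed.

Local Notation K := (Num.NumField.sort (complex R)).

Lemma deriv_phi (w : C) (hQ : phiQ w != 0) : exists d,
  is_derive w (1 : C) (fun z : C => (@phiC R z : K)) d /\
  d = ((2 + 6 * w - 3 * w ^+ 2 - 4 * w ^+ 3) * phiQ w - phiP w * (1 - 6 * w - 6 * w ^+ 2)) / phiQ w ^+ 2.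
Proof.
pose f : C -> K := fun z => z.
have hf : is_derive w (1 : C) f 1 by exact: is_derive_id.
have hc : forall a : K, is_derive w (1 : C) (cst a : C -> K) 0 by move=> a; exact: is_derive_cst.
have hP := is_deriveM (is_deriveM hf (is_deriveD (hc 2) hf)) (is_deriveB (is_deriveD (hc 1) hf) (is_deriveX 2 hf)).
have hQ' := is_deriveM (is_deriveD (hc 1) (is_deriveM (hc 2) hf)) (is_deriveB (is_deriveB (hc 1) hf) (is_deriveX 2 hf)).
set Qf := (_ * _ : C -> K) in hQ'.
have Qw : Qf w != 0 by rewrite /Qf /= /f.
have hd : derivable Qf w 1 by case: hQ'.
have hV' := deriveV Qw hd.
have hIV : is_derive w (1:C) (fun y => (Qf y)^-1) (- Qf w ^- 2 *: 'D_1 Qf w).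
  by apply: DeriveDef; [exact: derivableV | exact: hV'].
have hall := is_deriveM hP hIV.
rewrite (@derive_val _ _ _ _ _ _ _ hQ') in hall.
eexists; split.
  have <- : (f * (cst 2 + f) * (cst 1 + f - f ^+ 2)) * (fun y => (Qf y)^-1) = (fun z : C => (@phiC R z : K)).
    by apply: funext => z.
  exact: hall.
rewrite /Qf /f /= !fctE /GRing.scale /=.
move: hQ; rewrite /phiP /phiQ => hQ.
field.
by move: hQ; rewrite mulf_eq0 negb_or andbC.
Qed.

Lemma deriv_phi2 (w : C) (hQ : phiQ w != 0) :
  (derivable (@phiC R) w 1) /\ (derive1 (@phiC R) w = ((2 + 6 * w - 3 * w ^+ 2 - 4 * w ^+ 3) * phiQ w - phiP w * (1 - 6 * w - 6 * w ^+ 2)) / phiQ w ^+ 2).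
Proof.
have [d [hd hdE]] := deriv_phi w hQ. rewrite -hdE.
split.
  case: hd => h _. exact: h.
rewrite derive1E.
case: hd => _ h. exact: h.
Qed.

Lemma natC_neq0 n : (n.+1%:R : C) != 0.
Proof.
apply/eqP => h; have := congr1 (@complex.Re R) h; rewrite ReMn /= => h'.
by move/eqP: h'; rewrite pnatr_eq0.
Qed.

Lemma phiQ_root (w : C) : w ^+ 2 + w + 1 = 0 -> phiQ w != 0.
Proof.
move=> hw; have -> : phiQ w = (1 + 2 * w) * 2 - (1 + 2 * w) * (w ^+ 2 + w + 1) by rewrite /phiQ; ring.
rewrite hw mulr0 subr0 mulf_neq0 //.
apply/eqP => h; have := N2w1 w hw; rewrite addrC h /N /= => h3.
have : (0 : R) ^+ 2 + 0 ^+ 2 = 3 by rewrite -h3.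
rewrite expr0n /= addr0 => /eqP; rewrite eq_sym pnatr_eq0 //.
Qed.

Lemma phiC_root (w : C) : w ^+ 2 + w + 1 = 0 -> phiC w = w.
Proof.
move=> hw; have hQ := phiQ_root w hw.
have h := key w w hw; rewrite subrr mul0r oppr0 in h.
have h2 : phiP w = w * phiQ w.
  apply/eqP; rewrite -subr_eq0; apply/eqP.
  by move/eqP: h; rewrite mulf_eq0 (negbTE (natC_neq0 2)) /= => /eqP.
by rewrite /phiC h2 mulfK.
Qed.

Lemma half_lem (x y : C) : 2 * x - y = 0 -> x = y / 2.
Proof.
move=> h; apply/eqP; rewrite -subr_eq0.
have h2 := natC_neq0 1.
have -> : x - y / 2 = (2 * x - y) / 2 by field.
by rewrite h mul0r.
Qed.

Lemma attracting (w : C) : w ^+ 2 + w + 1 = 0 -> attracting_fixed (@phi R) (@phiC R) w.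
Proof.
move=> hw; have hQ := phiQ_root w hw.
have [hd hv] := deriv_phi2 w hQ.
split; first by rewrite /phi (negbTE hQ) phiC_root.
split => //.
have E : 2 * ((2 + 6 * w - 3 * w ^+ 2 - 4 * w ^+ 3) * phiQ w - phiP w * (1 - 6 * w - 6 * w ^+ 2)) - phiQ w ^+ 2 = (3 + 7 * w + 7 * w ^+ 2) * (w ^+ 2 + w + 1).
  rewrite /phiP /phiQ; ring.
rewrite hw mulr0 in E.
have E2 : (2 + 6 * w - 3 * w ^+ 2 - 4 * w ^+ 3) * phiQ w - phiP w * (1 - 6 * w - 6 * w ^+ 2) = phiQ w ^+ 2 / 2.
  exact: half_lem.
rewrite hv E2.
have -> : phiQ w ^+ 2 / 2 / phiQ w ^+ 2 = 2^-1 :> K.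
  by field; rewrite hQ.
rewrite ger0_norm ?invr_ge0 ?ler0n // invf_lt1 ?ltr0n // ltr1n //.
Qed.

Definition PR (x : R) := x * (2 + x) * (1 + x - x ^+ 2).
Definition QR (x : R) := (1 + 2 * x) * (1 - x - x ^+ 2).

Lemma phiP_real (x : R) : phiP (Complex x 0 : C) = Complex (PR x) 0.
Proof. apply: C_ext; rewrite /phiP /PR /=; ring. Qed.
Lemma phiQ_real (x : R) : phiQ (Complex x 0 : C) = Complex (QR x) 0.
Proof. apply: C_ext; rewrite /phiQ /QR /=; ring. Qed.

Lemma phiC_real (x : R) : QR x != 0 -> phiC (Complex x 0 : C) = Complex (PR x / QR x) 0.
Proof.
move=> hq; rewrite /phiC phiP_real phiQ_real; apply: C_ext => /=.
  by field; rewrite hq.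
ring.
Qed.

Lemma real_eq (z : C) : complex.Im z = 0 -> z = Complex (complex.Re z) 0.
Proof. by move=> h; apply: C_ext. Qed.

Lemma phiQ_real_ne0 (x : R) : phiQ (Complex x 0 : C) != 0 = (QR x != 0).
Proof.
rewrite phiQ_real; apply/idP/idP => h; apply/eqP => h0; move/eqP: h; apply.
  by rewrite h0.
by move: h0 => [].
Qed.

Lemma PQ_nocommon (x : R) : QR x = 0 -> PR x != 0.
Proof.
rewrite /QR /PR => /eqP; rewrite mulf_eq0 => /orP [/eqP h|/eqP h].
  have -> : x = - (1 / 2) by lra.
  apply/eqP => h2; lra.
have e : 1 + x - x ^+ 2 = 2 * x by lra.
rewrite e; apply/eqP => h2.
have : x * (2 + x) * (2 * x) = 0 by [].
move/eqP; rewrite !mulf_eq0 => /orP [/orP [/eqP h3|/eqP h3]|/orP [/eqP h3|/eqP h3]].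
- by move: h; rewrite h3 expr0n /=; lra.
- have h4 : x = -2 by lra. by move: h; rewrite h4; lra.
- lra.
- by move: h; rewrite h3 expr0n /=; lra.
Qed.

Lemma omega2E : (omega R : C) ^+ 2 = - 1 - omega R.
Proof. apply/eqP; rewrite -subr_eq0; apply/eqP; rewrite -omega_eq; ring. Qed.

Lemma omega2_eq : (omega R : C) ^+ 2 ^+ 2 + omega R ^+ 2 + 1 = 0.
Proof. rewrite omega2E -omega_eq; ring. Qed.

Lemma omega2_re : 2 * complex.Re ((omega R : C) ^+ 2) + 1 = 0.
Proof.
apply: re_root; first exact: omega2_eq.
move: omega_im; rewrite omega2E; case: (omega R) => a b /= hb.
apply/eqP => h; lra.
Qed.

Lemma upper_N (z : C) : 0 < complex.Im z -> N (z - omega R) < N (z + 1 + omega R).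
Proof.
move=> hz; rewrite -subr_lt0 (halfplane _ z omega_re).
have := omega_im; nra.
Qed.

Lemma lower_N (z : C) : complex.Im z < 0 -> N (z - omega R ^+ 2) < N (z + 1 + omega R ^+ 2).
Proof.
move=> hz; rewrite -subr_lt0 (halfplane _ z omega2_re).
have h : complex.Im ((omega R : C) ^+ 2) < 0.
  move: omega_im; rewrite omega2E; case: (omega R) => a b /= hb; lra.
nra.
Qed.

Lemma real_N (w v : C) : 2 * complex.Re w + 1 = 0 -> complex.Im v = 0 -> N (v - w) = N (v + 1 + w).
Proof.
move=> hw hv; apply/eqP; rewrite -subr_eq0 (halfplane _ v hw) hv mulr0 //.
Qed.

Lemma nonreal (z : C) : complex.Im z != 0 -> phiQ z != 0 /\ complex.Im (phiC z) != 0.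
Proof.
move=> hz.
have [w [hw [hr hlt]]] : exists w : C, [/\ w ^+ 2 + w + 1 = 0, 2 * complex.Re w + 1 = 0 & N (z - w) < N (z + 1 + w)].
  case: (ltgtP (complex.Im z) 0) => [h|h|h]; last by rewrite h eqxx in hz.
  - by exists (omega R ^+ 2); split; [exact: omega2_eq | exact: omega2_re | exact: lower_N].
  - by exists (omega R); split; [exact: omega_eq | exact: omega_re | exact: upper_N].
have [hQ [hlt2 _]] := step w z hw hlt.
split => //; apply/eqP => h0.
by move: hlt2; rewrite (real_N _ _ hr h0) ltxx.
Qed.

Lemma surj_real (c : R) : exists x : R, QR x != 0 /\ PR x / QR x = c.
Proof.
pose p : {poly R} := 'X * (2%:P + 'X) * (1 + 'X - 'X ^+ 2) - c%:P * ((1 + 2%:P * 'X) * (1 - 'X - 'X ^+ 2)).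
have hp : forall x, p.[x] = PR x - c * QR x.
  by move=> x; rewrite /p !hornerE /PR /QR.
pose r := (Num.sqrt 5 - 1) / 2 : R.
have s5 : Num.sqrt 5 ^+ 2 = 5 :> R by rewrite sqr_sqrtr // ler0n.
have s0 : 0 <= Num.sqrt 5 :> R by apply: sqrtr_ge0.
have s1 : 1 < Num.sqrt 5 :> R by nra.
have r0 : 0 < r by rewrite /r; lra.
have hr2 : r ^+ 2 + r = 1.
  transitivity ((Num.sqrt 5 ^+ 2 - 1) / 4 : R); first by rewrite /r; field.
  by rewrite s5; field.
have QRr : QR r = 0.
  rewrite /QR; have -> : 1 - r - r ^+ 2 = 0 by lra.
  by rewrite mulr0.
have PRr : 0 < PR r.
  rewrite /PR; have -> : 1 + r - r ^+ 2 = 2 * r by lra.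
  apply: mulr_gt0; first apply: mulr_gt0 => //.
    lra.
  lra.
pose a := - (1 / 2) : R.
have QRa : QR a = 0.
  rewrite /QR /a; have -> : 1 + 2 * - (1 / 2) = 0 :> R by field.
  by rewrite mul0r.
have PRa : PR a < 0 by rewrite /PR /a; lra.
have hab : a <= r by rewrite /a; lra.
have hprod : p.[a] <= 0 <= p.[r].
  rewrite !hp QRa QRr !mulr0 !subr0; apply/andP; split; exact: ltW.
have [x _ hroot] := poly_ivt hab hprod.
move/rootP: hroot; rewrite hp => /eqP; rewrite subr_eq0 => /eqP hx.
have hq : QR x != 0.
  apply/eqP => h; have := PQ_nocommon x h; by rewrite hx h mulr0 eqxx.
exists x; split => //; rewrite hx mulfK //.
Qed.

End Work.

Theorem lemma3p7 (R : realType) :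
  attracting_fixed (@phi R) (@phiC R) (@omega R) /\
  attracting_fixed (@phi R) (@phiC R) (@omega R ^+ 2) /\
  (forall z : Cplx R, 0 < complex.Im z ->
     sphere_cvg_fin (fun n => iter n (@phi R) (Some z)) (@omega R)) /\
  (forall z : Cplx R, complex.Im z < 0 ->
     sphere_cvg_fin (fun n => iter n (@phi R) (Some z)) (@omega R ^+ 2)) /\
  image (@ext_real_line R) (@phi R) = @ext_real_line R /\
  preimage (@phi R) (@ext_real_line R) = @ext_real_line R.
Proof.
split; first by apply: attracting; exact: omega_eq.
split; first by apply: attracting; exact: omega2_eq.
split; first by move=> z hz; apply: conv; [exact: omega_eq | exact: upper_N].
split; first by move=> z hz; apply: conv; [exact: omega2_eq | exact: lower_N].
have fwd : forall p, ext_real_line p -> ext_real_line (@phi R p).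
  case => [z|] //= hz; case: ifP => // hQ /=.
  rewrite (real_eq _ _ hz) phiC_real //.
  by rewrite -phiQ_real_ne0 -(real_eq _ _ hz) hQ.
have bwd : forall p, ext_real_line (@phi R p) -> ext_real_line p.
  case => [z|] //= h.
  case: (eqVneq (complex.Im z) 0) => // hz.
  have [hQ hI] := nonreal _ _ hz.
  by move: h; rewrite (negbTE hQ) /= => h; rewrite h eqxx in hI.
split.
  apply/seteqP; split.
    by move=> q [p hp <-]; exact: fwd.
  case => [y|] /= hy.
    have [x [hq hx]] := surj_real _ (complex.Re y).
    exists (Some (Complex x 0)) => //=.
    have hq' : phiQ (Complex x 0 : Cplx R) != 0 by rewrite phiQ_real_ne0.
    rewrite (negbTE hq') phiC_real // hx.
    by congr Some; symmetry; apply: real_eq.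
  exists (Some (Complex (- (1 / 2)) 0)) => //=.
  rewrite phiQ_real (_ : QR R (- (1 / 2)) = 0).
    by have -> : (Complex 0 0 : Cplx R) == 0 by apply/eqP.
  by rewrite /QR; field.
by apply/seteqP; split => p /=; [exact: bwd | exact: fwd].
Qed.
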